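(* Let $T$ be a reachable $\mathcal C_w$-maximal rigid module. For any $R,S\in\mathrm{add}(T)$ we have $Y_RY_S=q^{[R,S]}Y_{R\oplus S}$.
   Context: Setting: $\Lambda$ is the preprojective algebra of a finite connected quiver without oriented cycles with vertex set $I$, $w$ an element of the corresponding Weyl group with reduced expression $s_{i_r}\cdots s_{i_1}$, $\mathcal C_w$ the full subcategory of finite-dimensional $\Lambda$-modules that are quotients of finite direct sums of copies of $V_{\mathbf i}=\bigoplus_kV_k$, $V_k=\mathrm{soc}_{(i_k,\dots,i_1)}(\widehat I_{i_k})$ (where $\widehat I_i$ is the injective hull of the simple $S_i$ and $\mathrm{soc}_{(j_1,\dots,j_s)}(M)=M_s$, $M_0=0$, $M_p/M_{p-1}$ the sum of submodules of $M/M_{p-1}$ isomorphic to $S_{j_p}$). $[X,Y]=\dim\mathrm{Hom}_\Lambda(X,Y)$. A $\mathcal C_w$-maximal rigid module ($\mathrm{Ext}^1(T,T)=0$, and $X\in\mathcal C_w$, $\mathrm{Ext}^1(T\oplus X,X)=0$ imply $X\in\mathrm{add}T$) is $T=T_1\oplus\cdots\oplus T_r$ with pairwise non-isomorphic indecomposables, projective-injectives last; mutation replaces a non-projective $T_k$ by the unique indecomposable $T_k^*\not\cong T_k$ keeping maximal rigidity; reachable = obtained from $V_{\mathbf i}$ by mutations. $L_T=(\lambda_{ij})$, $\lambda_{ij}=[T_i,T_j]-[T_j,T_i]$. To a reachable $T$ is attached the cluster $(X_{T_1},\dots,X_{T_r})$ of its quantum seed, elements of a skew field satisfying $X_{T_i}X_{T_j}=q^{\lambda_{ij}}X_{T_j}X_{T_i}$.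 For $R=T_1^{a_1}\oplus\cdots\oplus T_r^{a_r}$ ($a_i\in\mathbb N$) put $X_R=q^{\frac12\sum_{i>j}a_ia_j\lambda_{ij}}X_{T_1}^{a_1}\cdots X_{T_r}^{a_r}$ and $Y_R=q^{-[R,R]/2}X_R$. *)

(* Defs.v *)
(* Abstract rendering of the data of a reachable
   C_w-maximal rigid module T = T_1 (+) ... (+) T_r together with its quantum
   cluster. *)
From HB Require Import structures.
From mathcomp Require Import all_boot all_order all_algebra.
Set Implicit Arguments. Unset Strict Implicit. Unset Printing Implicit Defensive.
Import Order.TTheory GRing.Theory Num.Theory.
Local Open Scope ring_scope.

Section QSeed.
Variables (r : nat) (h : 'I_r -> 'I_r -> nat).
(* h i j = [T_i, T_j] = dim Hom_Lambda(T_i, T_j). *)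

Definition lam (i j : 'I_r) : int := (h i j)%:Z - (h j i)%:Z.

(* R = T_1^{a_1} (+) ... (+) T_r^{a_r}, S = T_1^{b_1} (+) ... ;
   [R,S] = dim Hom(R,S) = sum_{i,j} a_i b_j [T_i,T_j]. *)
Definition homdim (a b : 'I_r -> nat) : nat :=
  (\sum_(i < r) \sum_(j < r) a i * b j * h i j)%N.

(* direct sum R (+) S corresponds to adding multiplicities *)
Definition msum (a b : 'I_r -> nat) : 'I_r -> nat := fun i => (a i + b i)%N.

Variables (K : unitRingType) (q12 : K) (X : 'I_r -> K).
(* q12 stands for q^{1/2}; q^m is q12 ^ (2 m). *)

Definition XR (a : 'I_r -> nat) : K :=
  q12 ^ (\sum_(i < r) \sum_(j < r | (j < i)%N) ((a i * a j)%:Z * lam i j))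
  * \prod_(i < r) X i ^+ a i.

Definition YR (a : 'I_r -> nat) : K := q12 ^ (- (homdim a a)%:Z) * XR a.
End QSeed.

(* Main.v *)
Require Import Defs.
From HB Require Import structures.
From mathcomp Require Import all_boot all_order all_algebra.
From mathcomp Require Import ring zify.
Set Implicit Arguments. Unset Strict Implicit. Unset Printing Implicit Defensive.
Import GRing.Theory.
Local Open Scope ring_scope.

Section Gen.
Variables (K : unitRingType) (q : K).
Hypothesis qU : q \is a GRing.unit.
Hypothesis qC : forall x : K, q * x = x * q.

Lemma qzC (z : int) (x : K) : q ^ z * x = x * q ^ z.
Proof.
have cq : GRing.comm x q by rewrite /GRing.comm qC.
case: z => n /=.
  by have := commrX n cq; rewrite /GRing.comm => ->.
by have := commrV (commrX n.+1 cq); rewrite /GRing.comm => ->.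
Qed.

Lemma comm1 (x y : K) (z : int) m : x * y = q ^ z * (y * x) ->
  x * y ^+ m = q ^ (z * m%:Z) * (y ^+ m * x).
Proof.
move=> Hxy; elim: m => [|m IH]; first by rewrite expr0 mulr0 expr0z mulr1 !mul1r.
rewrite exprSr mulrA IH -mulrA -(mulrA (y ^+ m)) Hxy.
rewrite (mulrA (y ^+ m)) -qzC -!mulrA mulrA -exprzDr //.
congr (q ^ _ * _); first (rewrite intS; ring).
Qed.

Lemma comm2 (x y : K) (z : int) k m : x * y = q ^ z * (y * x) ->
  x ^+ k * y ^+ m = q ^ (z * (k%:Z * m%:Z)) * (y ^+ m * x ^+ k).
Proof.
move=> Hxy; elim: k => [|k IH]; first by rewrite !expr0 mul0r mulr0 expr0z mulr1 !mul1r.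
rewrite exprS -mulrA IH mulrA -qzC -mulrA (mulrA x) (comm1 m Hxy) -!mulrA mulrA -exprzDr //.
congr (q ^ _ * _); first (rewrite intS; ring).
Qed.

Variables (n : nat) (F : nat -> K) (L : nat -> nat -> int) (a b : nat -> nat).
Hypothesis HF : forall i j, (i < n)%N -> (j < n)%N ->
  F i * F j = q ^ (2 * L i j) * (F j * F i).

Lemma prodcomm m k : (m < n)%N -> forall m', (m' <= n)%N ->
  F m ^+ k * \prod_(i < m') F i ^+ b i =
  q ^ (2 * \sum_(j < m') ((k * b j)%:Z * L m j)) * (\prod_(i < m') F i ^+ b i * F m ^+ k).
Proof.
move=> Hm; elim=> [|m' IH] Hm'.
  by rewrite !big_ord0 mulr0 expr0z !mul1r mulr1.
rewrite !big_ord_recr /= mulrA IH; last by lia.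
rewrite -!mulrA (comm2 k (b m') (HF Hm (_ : m' < n)%N)); last by lia.
rewrite (mulrA (\prod_(i < m') F i ^+ b i)) -qzC -mulrA mulrA -exprzDr //.
congr (q ^ _ * _).
rewrite PoszM; ring.
Qed.

Lemma prodmain m : (m <= n)%N ->
  \prod_(i < m) F i ^+ a i * \prod_(i < m) F i ^+ b i =
  q ^ (2 * \sum_(i < m) \sum_(j < i) ((a i * b j)%:Z * L i j)) *
  \prod_(i < m) F i ^+ (a i + b i).
Proof.
elim: m => [|m IH] Hm; first by rewrite !big_ord0 mulr0 expr0z !mul1r.
rewrite !big_ord_recr /= -mulrA (mulrA (F m ^+ a m)) prodcomm //; last by lia.
rewrite -!mulrA (mulrA (\prod_(i < m) F i ^+ a i)) -qzC -mulrA (mulrA (\prod_(i < m) F i ^+ a i)) IH; last by lia.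
rewrite -!mulrA -exprD mulrA -exprzDr //.
congr (q ^ _ * _); ring.
Qed.
End Gen.
Section Exp.
Variables (r : nat) (h : 'I_r -> 'I_r -> nat).

Definition Aq (a b : 'I_r -> nat) : int :=
  \sum_(i < r) \sum_(j < r | (j < i)%N) ((a i * b j)%:Z * lam h i j).
Definition Hz (a b : 'I_r -> nat) : int :=
  \sum_(i < r) \sum_(j < r) ((a i * b j)%:Z * (h i j)%:Z).

Lemma HzE a b : (homdim h a b)%:Z = Hz a b.
Proof.
rewrite /homdim /Hz (big_morph Posz PoszD (erefl 0%:Z)); apply: eq_bigr => i _.
rewrite (big_morph Posz PoszD (erefl 0%:Z)); apply: eq_bigr => j _.
by rewrite PoszM.
Qed.

Lemma swapsum (f : 'I_r -> 'I_r -> int) :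
  \sum_(i < r) \sum_(j < r | (i < j)%N) f i j =
  \sum_(i < r) \sum_(j < r | (j < i)%N) f j i.
Proof.
under eq_bigr do rewrite big_mkcond.
rewrite exchange_big; apply: eq_bigr => i _.
by rewrite [RHS]big_mkcond.
Qed.

Lemma lamN i j : lam h j i = - lam h i j.
Proof. by rewrite /lam opprB. Qed.

Lemma lam0 i : lam h i i = 0.
Proof. by rewrite /lam subrr. Qed.

Lemma HzD a b : Hz a b - Hz b a = Aq a b - Aq b a.
Proof.
have -> : Hz a b - Hz b a = \sum_(i < r) \sum_(j < r) ((a i * b j)%:Z * lam h i j).
  rewrite /Hz (exchange_big _ _ _ _ _ (fun i j => (b i * a j)%:Z * (h i j)%:Z)).
  rewrite -sumrB; apply: eq_bigr => i _; rewrite -sumrB; apply: eq_bigr => j _.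
  by rewrite /lam mulrBr mulnC.
have split i : \sum_(j < r) ((a i * b j)%:Z * lam h i j) =
   \sum_(j < r | (j < i)%N) ((a i * b j)%:Z * lam h i j) +
   \sum_(j < r | (i < j)%N) ((a i * b j)%:Z * lam h i j).
  rewrite (bigID (fun j : 'I_r => (j < i)%N)) /=; congr (_ + _).
  rewrite (bigID (fun j : 'I_r => (i < j)%N)) /= [X in _ + X]big1 ?addr0.
    by apply: eq_bigl => j; case: (ltngtP j i).
  move=> j; case: (ltngtP j i) => // /val_inj -> _; by rewrite lam0 mulr0.
under eq_bigr do rewrite split.
rewrite big_split /= swapsum /Aq; congr (_ + _).
rewrite -sumrN; apply: eq_bigr => i _; rewrite -sumrN; apply: eq_bigr => j _.
by rewrite lamN mulrN mulnC.
Qed.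

Lemma HzDl a b c : Hz (msum a b) c = Hz a c + Hz b c.
Proof.
rewrite /Hz -big_split; apply: eq_bigr => i _; rewrite -big_split.
by apply: eq_bigr => j _; rewrite /msum mulnDl PoszD mulrDl.
Qed.
Lemma HzDr a b c : Hz c (msum a b) = Hz c a + Hz c b.
Proof.
rewrite /Hz -big_split; apply: eq_bigr => i _; rewrite -big_split.
by apply: eq_bigr => j _; rewrite /msum mulnDr PoszD mulrDl.
Qed.
Lemma AqDl a b c : Aq (msum a b) c = Aq a c + Aq b c.
Proof.
rewrite /Aq -big_split; apply: eq_bigr => i _; rewrite -big_split.
by apply: eq_bigr => j _; rewrite /msum mulnDl PoszD mulrDl.
Qed.
Lemma AqDr a b c : Aq c (msum a b) = Aq c a + Aq c b.
Proof.
rewrite /Aq -big_split; apply: eq_bigr => i _; rewrite -big_split.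
by apply: eq_bigr => j _; rewrite /msum mulnDr PoszD mulrDl.
Qed.
End Exp.
Unset Implicit Arguments.

Theorem lemma10p4 (r : nat) (h : 'I_r -> 'I_r -> nat)
  (K : unitRingType)
  (K_skew : forall x : K, x != 0 -> x \is a GRing.unit)
  (q12 : K) (q12_unit : q12 \is a GRing.unit)
  (q12_central : forall x : K, q12 * x = x * q12)
  (X : 'I_r -> K) (X_nz : forall i, X i != 0)
  (X_qcomm : forall i j : 'I_r,
     X i * X j = q12 ^ (2 * lam h i j) * (X j * X i))
  (a b : 'I_r -> nat) :
  YR h q12 X a * YR h q12 X b
  = q12 ^ (2 * (homdim h a b)%:Z) * YR h q12 X (msum a b).
Proof.
pose F n := oapp X 1 (insub n).
pose L n m := oapp (fun i => oapp (lam h i) 0 (@insub _ (fun k => k < r)%N 'I_r m)) 0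
                 (@insub _ (fun k => k < r)%N 'I_r n).
pose a' n := oapp a 0%N (insub n).
pose b' n := oapp b 0%N (insub n).
have HF : forall i j, (i < r)%N -> (j < r)%N ->
    F i * F j = q12 ^ (2 * L i j) * (F j * F i).
  move=> i j Hi Hj.
  have -> : i = val (Ordinal Hi) by [].
  have -> : j = val (Ordinal Hj) by [].
  by rewrite /F /L !valK /=.
have YRE c : YR h q12 X c =
    q12 ^ (- Hz h c c + Aq h c c) * \prod_(i < r) X i ^+ c i.
  by rewrite /YR /XR exprzDr // HzE mulrA.
have Pconv c : \prod_(i < r) X i ^+ c i =
    \prod_(i < r) F i ^+ (oapp c 0%N (insub (val i))).
  by apply: eq_bigr => i _; rewrite /F valK.
have main := prodmain q12_unit q12_central a' b' HF (leqnn r).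
have Pback : \prod_(i < r) F i ^+ (a' i + b' i) = \prod_(i < r) X i ^+ msum a b i.
  by apply: eq_bigr => i _; rewrite /F /a' /b' valK.
have Sconv : \sum_(i < r) \sum_(j < i) ((a' i * b' j)%:Z * L i j) = Aq h a b.
  apply: eq_bigr => i _.
  rewrite (@big_ord_widen _ 0 +%R i r (fun j => (a' i * b' j)%:Z * L i j) (ltnW (ltn_ord i))).
  by apply: eq_bigr => j _; rewrite /a' /b' /L !valK.
have Pa : \prod_(i < r) X i ^+ a i = \prod_(i < r) F i ^+ a' i by apply: Pconv.
have Pb : \prod_(i < r) X i ^+ b i = \prod_(i < r) F i ^+ b' i by apply: Pconv.
clearbody F L a' b'.
rewrite !YRE -mulrA (mulrA (\prod_(i < r) X i ^+ a i)) -qzC // -mulrA mulrA -exprzDr //.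
rewrite Pa Pb main Pback Sconv mulrA -exprzDr //.
rewrite mulrA -exprzDr //.
congr (q12 ^ _ * _).
rewrite HzE HzDl !HzDr AqDl !AqDr.
have := HzD h a b.
move: (Hz h a a) (Hz h a b) (Hz h b a) (Hz h b b) (Aq h a a) (Aq h a b) (Aq h b a) (Aq h b b).
move=> x1 x2 x3 x4 y1 y2 y3 y4 E; lia.
Qed.
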